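(* Let $C\subseteq\mathbb{R}^q$ be a nonempty closed convex cone that is not a linear subspace, $\mathcal{X}\subseteq\mathbb{R}^m$ a nonempty convex set, and $\Gamma:\mathbb{R}^m\to\mathbb{R}^q$ a $C$-convex map. Let $k\in\operatorname{ri} C$ and $e^1,\dots,e^{q-1}\in\mathbb{R}^q$ such that $e^1,\dots,e^{q-1},k$ are linearly independent; let $E=(e^1,\dots,e^{q-1})$ and $T=(e^1,\dots,e^{q-1},k)$. Let $\varphi(y)=\inf\{r\in\mathbb{R} : rk-y\in C\}$ and $f(z)=\inf_{x\in\mathcal{X}}\varphi(\Gamma(x)-Ez)$ for $z\in\mathbb{R}^{q-1}$. For $w\in\mathbb{R}^{q-1}$ let $c^*(w)=T^{-T}\begin{pmatrix}w\\1\end{pmatrix}$. Then the conjugate of $f$ is $$f^*(w)=\begin{cases}\left[\langle c^*(-w),\Gamma(\cdot)\rangle+\delta_{\mathcal{X}}\right]^*(0) & \text{if } c^*(-w)\in C^+,\\ +\infty & \text{otherwise,}\end{cases}$$ where $C^+=\{c^*\in\mathbb{R}^q : \langle c^*,c\rangle\ge 0\ \forall c\in C\}$.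
   Context: $\Gamma$ is $C$-convex if $(1-t)\Gamma(x_1)+t\Gamma(x_2)-\Gamma((1-t)x_1+tx_2)\in C$ for all $x_1,x_2$, $t\in[0,1]$. $\delta_{\mathcal{X}}$ is the indicator function of $\mathcal{X}$; $g^*(p)=\sup_x(\langle p,x\rangle-g(x))$ denotes the Legendre–Fenchel conjugate, so $[\langle c,\Gamma\rangle+\delta_{\mathcal{X}}]^*(0)=-\inf_{x\in\mathcal{X}}\langle c,\Gamma(x)\rangle$. $T^{-T}$ is the inverse of the transpose of $T$. *)

(* Defs.v *)
From HB Require Import structures.
From mathcomp Require Import all_boot all_order all_algebra.
From mathcomp Require Import all_classical all_reals all_analysis.
Set Implicit Arguments. Unset Strict Implicit. Unset Printing Implicit Defensive.
Import Order.TTheory GRing.Theory Num.Theory.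
Import numFieldNormedType.Exports.
Local Open Scope classical_set_scope.
Local Open Scope ring_scope.

Section Defs.
Variable R : realType.

Definition dotv (d : nat) (u v : 'cV[R]_d) : R := \sum_(i < d) u i 0 * v i 0.

Definition is_cone (d : nat) (C : set 'cV[R]_d) : Prop :=
  forall c t, C c -> 0 <= t -> C (t *: c).

Definition is_linear_subspace (d : nat) (S : set 'cV[R]_d) : Prop :=
  [/\ S 0, (forall x y, S x -> S y -> S (x + y)) &
      (forall a x, S x -> S (a *: x))].

Definition aff_hull (d : nat) (S : set 'cV[R]_d) : set 'cV[R]_d :=
  [set y | exists (n : nat) (p : 'I_n -> 'cV[R]_d) (a : 'I_n -> R),
     [/\ (forall i, S (p i)), \sum_(i < n) a i = 1 & y = \sum_(i < n) a i *: p i]].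

(* relative interior (w.r.t. the sup-norm, equivalent to any norm on R^d) *)
Definition rel_interior (d : nat) (S : set 'cV[R]_d) : set 'cV[R]_d :=
  [set x | S x /\ exists eps : R, 0 < eps /\
     forall y, aff_hull S y -> (forall i, `|y i 0 - x i 0| < eps) -> S y].

Definition C_convex (m q : nat) (C : set 'cV[R]_q) (G : 'cV[R]_m -> 'cV[R]_q) : Prop :=
  forall x1 x2 t, 0 <= t -> t <= 1 ->
    C ((1 - t) *: G x1 + t *: G x2 - G ((1 - t) *: x1 + t *: x2)).

Definition dual_cone (d : nat) (C : set 'cV[R]_d) : set 'cV[R]_d :=
  [set cs | forall c, C c -> 0 <= dotv cs c].

Definition indicator (d : nat) (X : set 'cV[R]_d) (x : 'cV[R]_d) : \bar R :=
  if `[< X x >] then 0%E else +oo%E.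

Definition lf_conj (d : nat) (g : 'cV[R]_d -> \bar R) (p : 'cV[R]_d) : \bar R :=
  ereal_sup [set ((dotv p x)%:E - g x)%E | x in [set: 'cV[R]_d]].

Definition phi_k (q : nat) (C : set 'cV[R]_q) (k : 'cV[R]_q) (y : 'cV[R]_q) : \bar R :=
  ereal_inf [set r%:E | r in [set r : R | C (r *: k - y)]].

Definition append_col (d n : nat) (E : 'M[R]_(d, n)) (k : 'cV[R]_d) : 'M[R]_(d, n.+1) :=
  castmx (erefl d, addn1 n) (row_mx E k).

Definition append_coord (n : nat) (w : 'cV[R]_n) (a : R) : 'cV[R]_n.+1 :=
  castmx (addn1 n, erefl 1%N) (col_mx w (a%:M : 'cV[R]_1)).

End Defs.

(* Main.v *)
Require Import Defs.
From HB Require Import structures.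
From mathcomp Require Import all_boot all_order all_algebra.
From mathcomp Require Import all_classical all_reals all_analysis.
From mathcomp Require Import ring lra.
Import Order.TTheory GRing.Theory Num.Theory.
Import numFieldNormedType.Exports.
Local Open Scope classical_set_scope.
Local Open Scope ring_scope.

Section H.
Variable R : realType.

Lemma dotvD d (u a b : 'cV[R]_d) : dotv u (a + b) = dotv u a + dotv u b.
Proof. by rewrite /dotv -big_split; apply: eq_bigr => i _; rewrite mxE mulrDr. Qed.

Lemma dotvZ d (u a : 'cV[R]_d) t : dotv u (t *: a) = t * dotv u a.
Proof. rewrite /dotv mulr_sumr; apply: eq_bigr => i _; rewrite mxE; ring. Qed.

Lemma dotvN d (u a : 'cV[R]_d) : dotv u (- a) = - dotv u a.
Proof. by rewrite -scaleN1r dotvZ mulN1r. Qed.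

Lemma dotvNl d (u a : 'cV[R]_d) : dotv (- u) a = - dotv u a.
Proof. rewrite /dotv -sumrN; apply: eq_bigr => i _; rewrite mxE; ring. Qed.

Lemma dotv0l d (a : 'cV[R]_d) : dotv 0 a = 0.
Proof. by rewrite /dotv big1 // => i _; rewrite mxE mul0r. Qed.

Lemma dotv0r d (a : 'cV[R]_d) : dotv a 0 = 0.
Proof. by rewrite /dotv big1 // => i _; rewrite mxE mulr0. Qed.

Lemma dotv_mul d (u v : 'cV[R]_d) (A : 'M[R]_d) :
  dotv u (A *m v) = dotv (A^T *m u) v.
Proof.
rewrite /dotv.
under eq_bigr => i _ do rewrite mxE big_distrr.
under [RHS]eq_bigr => j _ do rewrite mxE big_distrl.
rewrite exchange_big; apply: eq_bigr => j _; apply: eq_bigr => i _.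
rewrite !mxE /=. by rewrite mulrCA mulrA. Qed.

Lemma ac_low n (z : 'cV[R]_n) r (i : 'I_n) :
  append_coord z r (widen_ord (leqnSn n) i) 0 = z i 0.
Proof.
rewrite /append_coord castmxE /= cast_ord_id.
have -> : cast_ord (esym (addn1 n)) (widen_ord (leqnSn n) i) = lshift 1 i.
  by apply: val_inj.
by rewrite col_mxEu.
Qed.

Lemma ac_max n (z : 'cV[R]_n) r :
  append_coord z r ord_max 0 = r.
Proof.
rewrite /append_coord castmxE /= cast_ord_id.
have -> : cast_ord (esym (addn1 n)) ord_max = rshift n (0 : 'I_1).
  by apply: val_inj => /=; rewrite addn0.
by rewrite col_mxEd mxE.
Qed.

Lemma acol_low d n (E : 'M[R]_(d, n)) k i (j : 'I_n) :
  append_col E k i (widen_ord (leqnSn n) j) = E i j.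
Proof.
rewrite /append_col castmxE /= cast_ord_id.
have -> : cast_ord (esym (addn1 n)) (widen_ord (leqnSn n) j) = lshift 1 j.
  by apply: val_inj.
by rewrite row_mxEl.
Qed.

Lemma acol_max d n (E : 'M[R]_(d, n)) k i :
  append_col E k i ord_max = k i 0.
Proof.
rewrite /append_col castmxE /= cast_ord_id.
have -> : cast_ord (esym (addn1 n)) ord_max = rshift n (0 : 'I_1).
  by apply: val_inj => /=; rewrite addn0.
by rewrite row_mxEr.
Qed.

Lemma dotv_ac n (a z : 'cV[R]_n) b r :
  dotv (append_coord a b) (append_coord z r) = dotv a z + b * r.
Proof. by rewrite /dotv big_ord_recr /= !ac_max; congr (_ + _); apply: eq_bigr => i _; rewrite !ac_low. Qed.

Lemma mul_ac n (E : 'M[R]_(n.+1, n)) k (z : 'cV[R]_n) r :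
  append_col E k *m append_coord z r = E *m z + r *: k.
Proof.
apply/matrixP => i j; rewrite (ord1 j) !mxE big_ord_recr /= acol_max ac_max.
congr (_ + _); last by rewrite mulrC.
by apply: eq_bigr => l _; rewrite acol_low ac_low.
Qed.

Lemma ac_surj n (v : 'cV[R]_n.+1) : exists z r, v = append_coord z r.
Proof.
exists (\col_i v (widen_ord (leqnSn n) i) 0), (v ord_max 0).
apply/matrixP => i j; rewrite (ord1 j).
case: (ltnP i n) => h.
  have -> : i = widen_ord (leqnSn n) (Ordinal h) by apply: val_inj.
  by rewrite ac_low mxE.
have -> : i = ord_max by apply: val_inj => /=; apply/eqP; rewrite eqn_leq h -ltnS ltn_ord.
by rewrite ac_max.
Qed.

End H.
Theorem proposition5p5 (R : realType) (n m : nat)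
  (C : set 'cV[R]_n.+1) (X : set 'cV[R]_m) (G : 'cV[R]_m -> 'cV[R]_n.+1)
  (E : 'M[R]_(n.+1, n)) (k : 'cV[R]_n.+1) :
  C !=set0 -> closed C -> convex_set C -> is_cone C -> ~ is_linear_subspace C ->
  X !=set0 -> convex_set X ->
  C_convex C G ->
  rel_interior C k ->
  row_free (append_col E k)^T ->
  let T : 'M[R]_n.+1 := append_col E k in
  let cstar (w : 'cV[R]_n) : 'cV[R]_n.+1 := invmx T^T *m append_coord w 1 in
  let f (z : 'cV[R]_n) : \bar R :=
    ereal_inf [set phi_k C k (G x - E *m z) | x in X] in
  forall w : 'cV[R]_n,
    (dual_cone C (cstar (- w)) ->
       lf_conj f w =
       lf_conj (fun x => ((dotv (cstar (- w)) (G x))%:E + indicator X x)%E) 0) /\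
    (~ dual_cone C (cstar (- w)) -> lf_conj f w = +oo%E).
Proof.
move=> [c0 Cc0] _ _ Ccone _ [x0 Xx0] _ _ _ Tfree T cstar f w.
set cs := cstar (- w).
have Tu : (append_col E k)^T \in unitmx by rewrite -row_free_unit.
have Tu' : append_col E k \in unitmx by rewrite -unitmx_tr.
have TTcs : (append_col E k)^T *m cs = append_coord (- w) 1.
  by rewrite /cs /cstar /T mulKVmx.
have key : forall z r, dotv w z - r = - dotv cs (E *m z + r *: k).
  move=> z r; rewrite -mul_ac dotv_mul TTcs dotv_ac dotvNl mul1r.
  by rewrite opprD opprK.
have C0 : C 0 by rewrite -(scale0r c0); apply: Ccone.
have Lge : forall x c, X x -> C c ->
    ((- dotv cs c - dotv cs (G x))%:E <= lf_conj f w)%E.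
  move=> x c Xx Cc.
  have [z [r hv]] := @ac_surj R n (invmx (append_col E k) *m (c + G x)).
  have hT : E *m z + r *: k = c + G x by rewrite -mul_ac -hv mulKVmx.
  apply: le_trans; last by apply: ereal_sup_ubound; exists z.
  have fzr : (f z <= r%:E)%E.
    apply: le_trans; first by apply: ereal_inf_lbound; exists x.
    apply: ereal_inf_lbound; exists r => //=.
    by rewrite opprB addrA [r *: k + _]addrC hT addrK.
  apply: le_trans (leeB (lexx _) fzr).
  by rewrite -EFinB lee_fin key hT dotvD opprD.
have Lle : forall e, (forall x, X x -> ((- dotv cs (G x))%:E <= e)%E) ->
    (forall c, C c -> 0 <= dotv cs c) -> (lf_conj f w <= e)%E.
  move=> e H Cd; apply: ge_ereal_sup => _ [z _ <-].
  case: e H => [s| |] H; last 2 first.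
  - by rewrite leey.
  - by have := H x0 Xx0.
  suff h : ((dotv w z - s)%:E <= f z)%E.
    rewrite lee_subel_addr //.
    by apply: le_trans (leeD (lexx s%:E) h); rewrite -EFinD addrC subrK.
  apply: le_ereal_inf_tmp => _ [x Xx <-].
  apply: le_ereal_inf_tmp => _ [r Cr <-].
  rewrite lee_fin; have := H x Xx; rewrite lee_fin => hs.
  have := Cd _ Cr.
  set c := r *: k - (G x - E *m z).
  have hc : E *m z + r *: k = c + G x.
    by rewrite /c opprB addrA subrK addrC.
  have := key z r; rewrite hc dotvD => hk hc0.
  lra.
move=> /=; split.
- move=> Cd; apply/le_anti/andP; split.
    apply: Lle => // x Xx.
    apply: le_trans; last by apply: ereal_sup_ubound; exists x.
    rewrite /indicator asboolT // dotv0l adde0 -EFinB sub0r //.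
  apply: ge_ereal_sup => _ [x _ <-].
  rewrite /indicator; case: asboolP => Xx.
    rewrite dotv0l adde0 -EFinB sub0r.
    by have := Lge x 0 Xx C0; rewrite dotv0r oppr0 sub0r.
  have -> : ((dotv cs (G x))%:E + +oo = +oo)%E by [].
  exact: leNye.
move=> nd.
have [c Cc hc] : exists2 c, C c & dotv cs c < 0.
  case: (pselect (exists2 c, C c & dotv cs c < 0)) => // hne; exfalso.
  apply: nd => c Cc; rewrite leNgt; apply/negP => hlt; apply: hne; by exists c.
have HM : forall M : R, (M%:E <= lf_conj f w)%E.
  move=> M; set a := dotv cs (G x0).
  set t := (`|M| + `|a|) / (- dotv cs c).
  have t0 : 0 <= t by rewrite /t divr_ge0 // ?addr_ge0 // oppr_ge0 ltW.
  apply: le_trans (Lge x0 (t *: c) Xx0 (Ccone _ _ Cc t0)).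
  have ht : t * dotv cs c = - (`|M| + `|a|).
    rewrite /t invrN mulrN mulNr -mulrA mulVf ?mulr1 //.
    by rewrite lt_eqF.
  rewrite lee_fin dotvZ ht -/a.
  have := ler_norm M; have := ler_norm (- a); rewrite normrN; rewrite opprK => h1 h2; apply: le_trans h2 _; by rewrite -addrA lerDl subr_ge0 ler_norm.
move: (lf_conj f w) HM => L; case: L => [s| |] HM //.
  move: (HM (s + 1)%R); rewrite lee_fin => h.
  have : (s < s + 1)%R by rewrite ltrDl.
  by rewrite ltNge h.
by have := HM 0.
Qed.
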